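(* Let $G$ be a $P_6$-free graph, let $\Omega$ be a potential maximal clique of $G$, and let $C^1,C^2$ be two different connected components of $G-\Omega$. Then $N(C^1)\setminus N(C^2)$ is fully adjacent to $C^1$, or $N(C^2)\setminus N(C^1)$ is fully adjacent to $C^2$.
   Context: All graphs are finite, simple and undirected. $P_6$ is the path on six vertices; $G$ is $P_6$-free if it has no induced subgraph isomorphic to $P_6$. For a vertex set $C$, $N(C)$ is the set of vertices outside $C$ with a neighbour in $C$. A set $Z$ is fully adjacent to $C$ if every vertex of $Z$ is adjacent to every vertex of $C$. A triangulation of $G$ is a set $F$ of non-edges such that $(V(G),E(G)\cup F)$ is chordal; it is minimal if no proper subset is a triangulation. A potential maximal clique of $G$ is a maximal clique of $(V(G),E(G)\cup F)$ for some minimal triangulation $F$. *)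

(* Defs.v *)
From mathcomp Require Import all_boot.
Set Implicit Arguments. Unset Strict Implicit. Unset Printing Implicit Defensive.

Definition simple_graph (T : finType) (e : rel T) : Prop :=
  symmetric e /\ irreflexive e.

Definition has_induced_P6 (T : finType) (e : rel T) : Prop :=
  exists f : 'I_6 -> T, injective f /\
    forall i j : 'I_6, e (f i) (f j) = (i.+1 == j :> nat) || (j.+1 == i :> nat).

Definition P6_free (T : finType) (e : rel T) : Prop := ~ has_induced_P6 e.

Definition has_induced_cycle (T : finType) (e : rel T) (k : nat) : Prop :=
  exists f : 'I_k -> T, injective f /\
    forall i j : 'I_k, e (f i) (f j) =
      ((i.+1 %% k == j :> nat) || (j.+1 %% k == i :> nat)).

Definition chordal (T : finType) (e : rel T) : Prop :=
  forall k, 4 <= k -> ~ has_induced_cycle e k.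

Definition fill (T : finType) (e : rel T) (F : {set {set T}}) : rel T :=
  fun x y => (x != y) && (e x y || ([set x; y] \in F)).

Definition nonedge_set (T : finType) (e : rel T) (F : {set {set T}}) : Prop :=
  forall A, A \in F -> exists x y, [/\ x != y, A = [set x; y] & ~~ e x y].

Definition triangulation (T : finType) (e : rel T) (F : {set {set T}}) : Prop :=
  nonedge_set e F /\ chordal (fill e F).

Definition minimal_triangulation (T : finType) (e : rel T) (F : {set {set T}}) : Prop :=
  triangulation e F /\ forall F' : {set {set T}}, F' \proper F -> ~ triangulation e F'.

Definition is_clique (T : finType) (e : rel T) (K : {set T}) : Prop :=
  forall x y, x \in K -> y \in K -> x != y -> e x y.

Definition is_maximal_clique (T : finType) (e : rel T) (K : {set T}) : Prop :=
  is_clique e K /\ forall K' : {set T}, K \proper K' -> ~ is_clique e K'.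

Definition potential_maximal_clique (T : finType) (e : rel T) (W : {set T}) : Prop :=
  exists F, minimal_triangulation e F /\ is_maximal_clique (fill e F) W.

Definition restrict (T : finType) (e : rel T) (S : {set T}) : rel T :=
  fun x y => [&& e x y, x \in S & y \in S].

Definition connected_set (T : finType) (e : rel T) (C : {set T}) : Prop :=
  forall x y, x \in C -> y \in C -> connect (restrict e C) x y.

Definition component_of (T : finType) (e : rel T) (W C : {set T}) : Prop :=
  [/\ C != set0, [disjoint C & W], connected_set e C &
      forall C' : {set T}, C \proper C' -> [disjoint C' & W] -> ~ connected_set e C'].

Definition nbh (T : finType) (e : rel T) (C : {set T}) : {set T} :=
  [set v | (v \notin C) && [exists u in C, e u v]].

Definition fully_adjacent (T : finType) (e : rel T) (Z C : {set T}) : Prop :=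
  forall z c, z \in Z -> c \in C -> e z c.

(* Main.v *)
Require Import Defs.
From mathcomp Require Import all_boot zify.
From Stdlib Require Import Classical.
Set Implicit Arguments. Unset Strict Implicit. Unset Printing Implicit Defensive.

Section G.
Variables (T : finType) (e : rel T).
Hypothesis esym : symmetric e.

Lemma restrict_sym S : symmetric (restrict e S).
Proof. by move=> x y; rewrite /restrict esym (andbC (x \in S)). Qed.

Lemma restrict_mono (A B : {set T}) x y :
  A \subset B -> connect (restrict e A) x y -> connect (restrict e B) x y.
Proof.
move=> sAB; apply: connect_sub => a b /and3P[eab aA bA].
by apply: connect1; rewrite /restrict eab (subsetP sAB _ aA) (subsetP sAB _ bA).
Qed.

Lemma connected_hub (A : {set T}) u :
  u \in A -> (forall p, p \in A -> connect (restrict e A) p u) -> connected_set e A.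
Proof.
move=> uA H p q pA qA; apply: connect_trans (H p pA) _.
by rewrite (sym_connect_sym (@restrict_sym A)); apply: H.
Qed.

Lemma path_last_in S w p : path (restrict e S) w p -> w \in S -> last w p \in S.
Proof.
elim: p w => //= z p IH w /andP[/and3P[_ _ zS] pp] _; exact: IH.
Qed.

Lemma exit_edge (C : {set T}) (P : pred T) s t :
  connected_set e C -> s \in C -> t \in C -> P s -> ~~ P t ->
  exists u v, [/\ u \in C, v \in C, e u v, P u & ~~ P v].
Proof.
move=> cC sC tC Ps Pt; case/connectP: (cC s t sC tC) => p pp tE.
elim: p s sC Ps pp tE => [|z p IH] s sC Ps /=; first by move=> _ tE; rewrite tE Ps in Pt.
case/andP=> /and3P[esz _ zC] pp tE.
case Pz: (P z); first exact: IH Pz pp tE.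
by exists s, z; rewrite Pz.
Qed.

Lemma disjI (A B : {set T}) : (forall z, z \in A -> z \notin B) -> [disjoint A & B].
Proof. by move=> H; rewrite disjoints_subset; apply/subsetP => z zA; rewrite inE H. Qed.

Lemma nbh_sub_W W C : component_of e W C -> nbh e C \subset W.
Proof.
case=> Cn0 dCW cC maxC; apply/subsetP => v; rewrite inE => /andP[vC /existsP[u /andP[uC euv]]].
apply: contraT => vW; case: (maxC (v |: C)).
- by apply/properP; split; [apply/subsetP=> z zC; rewrite inE zC orbT | exists v; rewrite ?inE ?eqxx].
- apply: disjI => z; rewrite !inE => /orP[/eqP->|zC] //.
  by rewrite (disjointFr dCW zC).
- apply: (@connected_hub _ u); first by rewrite inE uC orbT.
  move=> p; rewrite !inE => /orP[/eqP->|pC].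
  + by apply: connect1; rewrite /restrict esym euv !inE eqxx uC orbT.
  + by apply: (@restrict_mono C); [apply/subsetP=> z zC; rewrite inE zC orbT | apply: cC].
Qed.

Lemma comp_absorb W C1 (D : {set T}) c :
  component_of e W C1 -> connected_set e D -> [disjoint D & W] ->
  c \in D -> c \in C1 -> D \subset C1.
Proof.
case=> _ dCW cC maxC cD dDW cDD cC1; apply: contraT => nsub.
case: (maxC (C1 :|: D)).
- apply/properP; split; first exact: subsetUl.
  by case/subsetPn: nsub => z zD zC; exists z; rewrite ?inE ?zD ?orbT.
- apply: disjI => z; rewrite !inE => /orP[zC|zD].
  + by rewrite (disjointFr dCW zC).
  + by rewrite (disjointFr dDW zD).
- apply: (@connected_hub _ c); first by rewrite inE cC1.
  move=> p; rewrite inE => /orP[pC|pD].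
  + exact: (@restrict_mono C1) (subsetUl _ _) (cC p c pC cC1).
  + exact: (@restrict_mono D) (subsetUr _ _) (cD p c pD cDD).
Qed.

Lemma disj_notin (A B : {set T}) x : [disjoint A & B] -> x \in A -> x \notin B.
Proof. by move=> d xA; rewrite (disjointFr d xA). Qed.

Definition gcomp (W : {set T}) (w : T) : {set T} := [set v | connect (restrict e (~: W)) w v].

Lemma comp_props (W : {set T}) w : w \notin W ->
  [/\ w \in gcomp W w, [disjoint gcomp W w & W], connected_set e (gcomp W w)
   & nbh e (gcomp W w) \subset W].
Proof.
move=> wW.
have inC v : v \in gcomp W w -> v \notin W.
  rewrite inE => /connectP[p pp ->].
  by have := path_last_in pp; rewrite !inE; apply.
have w0 : w \in gcomp W w by rewrite inE connect0.
split => //.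
- exact: disjI.
- apply: (connected_hub w0) => p pC.
  rewrite (sym_connect_sym (@restrict_sym _)).
  move: pC; rewrite inE => /connectP[q qq ->].
  have gen : forall q0 q', q0 \in gcomp W w -> path (restrict e (~: W)) q0 q' ->
      connect (restrict e (gcomp W w)) q0 (last q0 q').
    move=> q0 q'; elim: q' q0 => [|z q' IH] q0 q0C /=; first by move=> _; exact: connect0.
    case/andP=> rz qq'.
    have zC : z \in gcomp W w.
      rewrite inE; apply: connect_trans (connect1 rz).
      by move: q0C; rewrite inE.
    apply: connect_trans (IH _ zC qq'); apply: connect1.
    by move: rz => /and3P[ez _ _]; rewrite /restrict ez q0C zC.
  exact: gen.
- apply/subsetP => v; rewrite inE => /andP[vC /existsP[u /andP[uC euv]]].
  apply: contraT => vW; move: vC; rewrite inE; case/negP.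
  apply: connect_trans (_ : connect _ w u) (connect1 _); first by move: uC; rewrite inE.
  by rewrite /restrict euv !inE vW (inC _ uC).
Qed.
End G.


Lemma modS_mod m k : (m %% k).+1 %% k = m.+1 %% k.
Proof. by rewrite -[(m %% k).+1]addn1 modnDml addn1. Qed.

Lemma cycle_sep (T : finType) (r : rel T) (k : nat) (f : 'I_k -> T) (C S : {set T}) :
  injective f ->
  (forall i j : 'I_k, r (f i) (f j) = ((i.+1 %% k == j :> nat) || (j.+1 %% k == i :> nat))) ->
  (forall a b, a \in C -> b \notin C -> r a b -> b \in S) ->
  (forall a b, a \in S -> b \in S -> a != b -> r a b) ->
  forall i0 j0, f i0 \in C -> f j0 \notin C -> f j0 \notin S -> False.
Proof.
move=> finj hf hC hS i0 j0 fi0 fj0C fj0S.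
have kp : 0 < k := leq_ltn_trans (leq0n i0) (ltn_ord i0).
pose idx n : 'I_k := Ordinal (ltn_pmod n kp).
pose h d := f (idx (i0 + d)).
have h0 : h 0 = f i0 by congr f; apply: val_inj; rewrite /= addn0 modn_small.
have hk : h k = f i0 by congr f; apply: val_inj; rewrite /= modnDr modn_small.
have hadj d : r (h d) (h d.+1) && r (h d.+1) (h d).
  by rewrite !hf /= !modS_mod addnS eqxx orbT.
pose dj := (j0 + (k - i0)) %% k.
have hdj : h dj = f j0.
  congr f; apply: val_inj => /=.
  by rewrite modnDmr addnCA subnKC ?(ltnW (ltn_ord i0)) // modnDr modn_small.
have djk : dj < k by rewrite ltn_pmod.
have dj0 : 0 < dj.
  rewrite lt0n; apply/eqP => dj0; move: fj0C; rewrite -hdj dj0 h0 fi0 //.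
have exA : exists d, h d \notin C by exists dj; rewrite hdj.
case: (ex_minnP exA) => a haC amin.
have adj : a <= dj by apply: amin; rewrite hdj.
have a0 : 0 < a by rewrite lt0n; apply: contraNneq haC => ->; rewrite h0.
have haS : h a \in S.
  move: a0 haC amin adj; case: a => // a _ haC amin _.
  have ha : h a \in C by apply: contraT => /amin; rewrite ltnn.
  by apply: (hC _ _ ha haC); case/andP: (hadj a).
have exB : exists d, (d < k) && (h d \notin C) by exists dj; rewrite djk hdj.
have ubB : forall d, (d < k) && (h d \notin C) -> d <= k by move=> d /andP[/ltnW].
case: (ex_maxnP exB ubB) => b /andP[bk hbC] bmax.
have djb : dj <= b by apply: bmax; rewrite djk hdj.
have hbS : h b \in S.
  have hb1 : h b.+1 \in C.
    case: (boolP (b.+1 < k)) => bk'.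
      by apply: contraT => hb; move: (bmax b.+1); rewrite bk' hb ltnn => /(_ isT).
    have -> : b.+1 = k by apply/eqP; rewrite eqn_leq bk leqNgt.
    by rewrite hk.
  by apply: (hC _ _ hb1 hbC); case/andP: (hadj b).
have adj' : a < dj by rewrite ltn_neqAle adj andbT; apply/eqP => eq; move: fj0S; rewrite -hdj -eq haS.
have djb' : dj < b by rewrite ltn_neqAle djb andbT; apply/eqP => eq; move: fj0S; rewrite -hdj eq hbS.
have ab : a.+1 < b by apply: leq_ltn_trans djb'.
have ne : h a != h b.
  apply/negP => /eqP /finj /(congr1 val) /= /eqP; rewrite eqn_modDl !modn_small //.
    by move/eqP => eab; move: ab; rewrite eab ltnNge leqnSn.
  lia.
have := hS _ _ haS hbS ne; rewrite hf /= !modS_mod -!addnS.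
case/orP => /eqP /eqP; rewrite eqn_modDl.
  rewrite !modn_small //; last lia.
  by move/eqP => eab; move: ab; rewrite eab ltnn.
case: (boolP (b.+1 < k)) => bk'.
  have ak : a < k by lia.
  rewrite (modn_small bk') (modn_small ak).
  move/eqP => eab; lia.
have -> : b.+1 = k by apply/eqP; rewrite eqn_leq bk leqNgt.
rewrite modnn modn_small; last lia.
move/eqP => a0'; lia.
Qed.

Lemma succ_mod i k : i < k -> i.+1 %% k = if i.+1 == k then 0 else i.+1.
Proof. move=> ik; case: eqP => E; first by rewrite E modnn. rewrite modn_small //; lia. Qed.

Lemma cyc_arith k ix : 4 <= k -> ix < k ->
  let sv := if ix.+1 == k then 0 else ix.+1 in
  let pv := if ix == 0 then k.-1 else ix.-1 in
  [/\ sv < k, pv < k, ix.+1 %% k == sv, pv.+1 %% k == ix &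
   [/\ sv != pv, sv != ix, pv != ix & ~~ ((sv.+1 %% k == pv) || (pv.+1 %% k == sv))]].
Proof.
move=> k4 ixk sv pv.
have svk : sv < k by rewrite /sv; case: eqP; lia.
have pvk : pv < k by rewrite /pv; case: eqP; lia.
rewrite !succ_mod // negb_or /sv /pv.
case: (eqVneq ix.+1 k) => E1; case: (eqVneq ix 0) => E2 /=;
  repeat (case: ifP => /eqP ?); rewrite ?eqxx /=; try lia.
all: repeat split; apply/eqP; lia.
Qed.


Section P3.
Variables (T : finType) (e : rel T).
Hypothesis esym : symmetric e.

Lemma fill_sym F : symmetric (fill e F).
Proof. by move=> x y; rewrite /fill eq_sym esym (setUC [set x]). Qed.

Lemma fill_sep F W : minimal_triangulation e F -> is_clique (fill e F) W ->
  forall C : {set T}, nbh e C \subset W -> forall u x, u \in C -> x \notin C ->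
  x \notin nbh e C -> fill e F u x = false.
Proof.
move=> [[neF chF] minF] clW C nCW u x uC xC xN.
apply/negP => Hux.
have eux : ~~ e u x.
  by apply: contra xN => eux; rewrite inE xC /=; apply/existsP; exists u; rewrite uC eux.
have uxF : [set u; x] \in F by move: Hux; rewrite /fill (negbTE eux) /= => /andP[_ ->].
pose cross (A : {set T}) := [exists a, exists b,
  [&& a \in C, b \notin C, b \notin nbh e C & A == [set a; b]]].
pose F' := [set A in F | ~~ cross A].
have cux : cross [set u; x].
  by apply/existsP; exists u; apply/existsP; exists x; rewrite uC xC xN eqxx.
apply: (minF F').
  rewrite properEneq; apply/andP; split; last by apply/subsetP => A; rewrite inE => /andP[].
  apply/eqP => eq; have : [set u; x] \in F' by rewrite eq.
  by rewrite inE uxF cux.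
split; first by move=> A; rewrite inE => /andP[AF _]; exact: neF.
move=> k hk [f [finj hf]].
have cross_pair a b : cross [set a; b] ->
    ((a \in C) && (b \notin C) && (b \notin nbh e C)) ||
    ((b \in C) && (a \notin C) && (a \notin nbh e C)).
  case/existsP => a' /existsP[b' /and4P[a'C b'C b'N /eqP E]].
  have : a' \in [set a; b] by rewrite E !inE eqxx.
  have : b' \in [set a; b] by rewrite E !inE eqxx orbT.
  rewrite !in_set2 => /orP[]/eqP eb /orP[]/eqP ea; subst.
  1-4: first [by rewrite a'C in b'C | by apply/orP; left; rewrite a'C b'C b'N | by apply/orP; right; rewrite a'C b'C b'N].
have agree a b : ~~ cross [set a; b] -> fill e F' a b = fill e F a b.
  by move=> nc; rewrite /fill inE nc andbT.
have sep a b : a \in C -> b \notin C -> fill e F' a b -> b \in nbh e C.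
  move=> aC bC; apply: contraTT => bN.
  have eab : ~~ e a b.
    by apply: contra bN => eab; rewrite inE bC /=; apply/existsP; exists a; rewrite aC eab.
  have cr : cross [set a; b].
    by apply/existsP; exists a; apply/existsP; exists b; rewrite aC bC bN eqxx.
  by rewrite /fill inE (negbTE eab) /= cr !andbF.
have cl a b : a \in nbh e C -> b \in nbh e C -> a != b -> fill e F' a b.
  move=> aN bN ab; rewrite agree; first exact: clW (subsetP nCW _ aN) (subsetP nCW _ bN) ab.
  by apply/negP => /cross_pair; rewrite aN bN !andbF.
case: (boolP [exists i, f i \in C]) => [/existsP[i0 fi0]|noC].
  case: (boolP [exists j, (f j \notin C) && (f j \notin nbh e C)]) =>
     [/existsP[j0 /andP[fj0C fj0N]]|allA].
    exact: (cycle_sep finj hf sep cl fi0 fj0C fj0N).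
  apply: (chF k hk); exists f; split => // i j; rewrite -hf agree //.
  move/existsPn: allA => allA.
  apply/negP => /cross_pair /orP[]/andP[/andP[_ h1] h2].
    by move: (allA j); rewrite h1 h2.
  by move: (allA i); rewrite h1 h2.
apply: (chF k hk); exists f; split => // i j; rewrite -hf agree //.
move/existsPn: noC => noC.
apply/negP => /cross_pair /orP[]/andP[/andP[h _] _].
  by move: (noC i); rewrite h.
by move: (noC j); rewrite h.
Qed.

End P3.


Section P4.
Variables (T : finType) (e : rel T).
Hypothesis esym : symmetric e.

Lemma pmc_sep F W x y : minimal_triangulation e F -> is_clique (fill e F) W ->
  x \in W -> y \in W -> x != y -> ~~ e x y ->
  exists C : {set T}, [/\ [disjoint C & W], connected_set e C, nbh e C \subset W,
                         x \in nbh e C & y \in nbh e C].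
Proof.
move=> mt clW xW yW nxy nexy; have [[neF chF] minF] := mt.
apply: NNPP => H0.
have Hxy : fill e F x y := clW x y xW yW nxy.
have xyF : [set x; y] \in F by move: Hxy; rewrite /fill (negbTE nexy) /= => /andP[_ ->].
pose F' := F :\ [set x; y].
apply: (minF F').
  rewrite properEneq subD1set andbT; apply/eqP => eq.
  have : [set x; y] \in F' by rewrite eq.
  by rewrite in_setD1 eqxx.
split; first by move=> A; rewrite in_setD1 => /andP[_ AF]; exact: neF.
move=> k hk [f [finj hf]].
have H'E a b : fill e F' a b = fill e F a b && ([set a; b] != [set x; y]).
  rewrite /fill in_setD1; case: ([set a; b] =P [set x; y]) => [E|_]; last by rewrite /= andbT.
  rewrite /= !andbF orbF; apply/negP => /andP[ab eab].
  have : a \in [set x; y] by rewrite -E in_set2 eqxx.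
  have : b \in [set x; y] by rewrite -E in_set2 eqxx orbT.
  rewrite !in_set2 => /orP[]/eqP eb /orP[]/eqP ea; subst.
  1-4: first [by rewrite eqxx in ab | by rewrite eab in nexy | by rewrite esym eab in nexy].
have [i [j /eqP Eij]] : exists i j, [set f i; f j] == [set x; y].
  apply: NNPP => nex; apply: (chF k hk); exists f; split => // i j.
  rewrite -hf H'E; suff -> : [set f i; f j] != [set x; y] by rewrite andbT.
  by apply/negP => E; apply: nex; exists i, j.
have onc z : z \in [set x; y] -> exists iz, f iz = z.
  rewrite -Eij in_set2 => /orP[]/eqP ->; [by exists i | by exists j].
have [ix fxi] : exists ix, f ix = x by apply: onc; rewrite in_set2 eqxx.
have [iy fyi] : exists iy, f iy = y by apply: onc; rewrite in_set2 eqxx orbT.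
have hW jj : fill e F' x (f jj) -> f jj \in W.
  move=> Hj; apply: contraT => njW.
  have [c0 cd cc cn] := comp_props esym njW.
  set C := gcomp e W (f jj) in c0 cd cc cn.
  have xC : x \notin C by rewrite (disjointFl cd xW).
  have yC : y \notin C by rewrite (disjointFl cd yW).
  have xN : x \in nbh e C.
    apply: contraT => xN.
    have := fill_sep mt clW cn c0 xC xN.
    by rewrite fill_sym // -{1}fxi; move: Hj; rewrite H'E fxi => /andP[-> _].
  have yN : y \notin nbh e C.
    by apply/negP => yN; apply: H0; exists C; split.
  have sepC : forall a b, a \in C -> b \notin C -> fill e F' a b -> b \in nbh e C.
    move=> a b aC bC; rewrite H'E => /andP[Hab _]; apply: contraT => bN.
    by rewrite (fill_sep mt clW cn aC bC bN) in Hab.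
  have clC : forall a b, a \in nbh e C -> b \in nbh e C -> a != b -> fill e F' a b.
    move=> a b aN bN ab; rewrite H'E clW ?(subsetP cn) //=.
    apply/eqP => E; have : y \in [set a; b] by rewrite E in_set2 eqxx orbT.
    by rewrite in_set2 => /orP[]/eqP Ey; [rewrite Ey aN in yN | rewrite Ey bN in yN].
  have := @cycle_sep _ _ _ _ _ _ finj hf sepC clC jj iy c0.
  by rewrite fyi => /(_ yC yN).

have ixk := ltn_ord ix.
have [svk pvk sadj padj [nsp nsi npi nadj]] := @cyc_arith k ix hk ixk.
set sv := (if _ then _ else _) in svk sadj nsp nsi nadj.
set pv := (if _ then _ else _) in pvk padj nsp npi nadj.
pose S' : 'I_k := Ordinal svk.
pose P' : 'I_k := Ordinal pvk.
have fS : f S' \in W by apply: hW; rewrite -fxi hf /= sadj.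
have fP : f P' \in W by apply: hW; rewrite -fxi hf /= padj orbT.
have neq (a b : 'I_k) : (a : nat) != b -> f a != f b.
  by move=> ab; apply: contra ab => /eqP /finj ->.
have := hf S' P'; rewrite /= (negbTE nadj) H'E clW //=; last exact: neq.
move/negbFE/eqP => E.
have : x \in [set f S'; f P'] by rewrite E in_set2 eqxx.
rewrite in_set2 -fxi => /orP[]/eqP /finj /(congr1 val) /= E'.
  by rewrite E' eqxx in nsi.
by rewrite E' eqxx in npi.
Qed.

End P4.


Definition adj6 (i j : 'I_6) := (i.+1 == j :> nat) || (j.+1 == i :> nat).
Lemma adj6_inj (i j : 'I_6) : (forall m, adj6 i m = adj6 j m) -> i = j.
Proof.
move=> H; apply: val_inj.
move: (H (@Ordinal 6 0 isT)) (H (@Ordinal 6 1 isT)) (H (@Ordinal 6 2 isT))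
      (H (@Ordinal 6 3 isT)) (H (@Ordinal 6 4 isT)) (H (@Ordinal 6 5 isT)).
rewrite /adj6 /=.
by case: i j {H} => [[|[|[|[|[|[|i]]]]]] Hi] [[|[|[|[|[|[|j]]]]]] Hj].
Qed.

Lemma P6_of (T : finType) (e : rel T) (v0 v1 v2 v3 v4 v5 : T) :
  simple_graph e ->
  e v0 v1 -> e v1 v2 -> e v2 v3 -> e v3 v4 -> e v4 v5 ->
  ~~ e v0 v2 -> ~~ e v0 v3 -> ~~ e v0 v4 -> ~~ e v0 v5 ->
  ~~ e v1 v3 -> ~~ e v1 v4 -> ~~ e v1 v5 ->
  ~~ e v2 v4 -> ~~ e v2 v5 -> ~~ e v3 v5 -> has_induced_P6 e.
Proof.
move=> [esym eirr] h01 h12 h23 h34 h45 n02 n03 n04 n05 n13 n14 n15 n24 n25 n35.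
pose f (i : 'I_6) := nth v0 [:: v0; v1; v2; v3; v4; v5] i.
have hadj : forall i j, e (f i) (f j) = adj6 i j.
  move=> [[|[|[|[|[|[|i]]]]]] Hi] [[|[|[|[|[|[|j]]]]]] Hj] //; rewrite /f /adj6 /=.
  all: rewrite ?eirr ?h01 ?h12 ?h23 ?h34 ?h45 ?(negbTE n02) ?(negbTE n03) ?(negbTE n04)
     ?(negbTE n05) ?(negbTE n13) ?(negbTE n14) ?(negbTE n15) ?(negbTE n24) ?(negbTE n25)
     ?(negbTE n35) //.
  all: try (rewrite esym ?h01 ?h12 ?h23 ?h34 ?h45 ?(negbTE n02) ?(negbTE n03) ?(negbTE n04) ?(negbTE n05) ?(negbTE n13) ?(negbTE n14) ?(negbTE n15) ?(negbTE n24) ?(negbTE n25) ?(negbTE n35) //).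
exists f; split => // i j E; apply: adj6_inj => m; by rewrite -!hadj E.
Qed.

Lemma nbh_in (T : finType) (e : rel T) (C : {set T}) a v :
  a \in C -> v \notin C -> e a v -> v \in nbh e C.
Proof. by move=> aC vC eav; rewrite inE vC /=; apply/existsP; exists a; rewrite aC eav. Qed.

Theorem lemma4 (T : finType) (e : rel T) (W C1 C2 : {set T}) :
  simple_graph e -> P6_free e ->
  potential_maximal_clique e W ->
  component_of e W C1 -> component_of e W C2 -> C1 != C2 ->
  fully_adjacent e (nbh e C1 :\: nbh e C2) C1 \/
  fully_adjacent e (nbh e C2 :\: nbh e C1) C2.
Proof.
move=> sg p6 [F [mt [clW _]]] cC1 cC2 neq.
have [esym eirr] := sg.
have nW1 := nbh_sub_W esym cC1.
have nW2 := nbh_sub_W esym cC2.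
have [_ dC1 cc1 _] := cC1.
have [_ dC2 cc2 _] := cC2.
have d12 c : c \in C1 -> c \notin C2.
  move=> c1; apply/negP => c2.
  have s21 := comp_absorb esym cC1 cc2 dC2 c2 c1.
  have s12 := comp_absorb esym cC2 cc1 dC1 c1 c2.
  by move: neq; rewrite eqEsubset s12 s21.
have d21 c : c \in C2 -> c \notin C1 by move=> c2; apply: contra (d12 c) _; rewrite negbK.
have W1 c : c \in C1 -> c \notin W by move=> c1; rewrite (disjointFr dC1 c1).
have W2 c : c \in C2 -> c \notin W by move=> c2; rewrite (disjointFr dC2 c2).
case: (classic (fully_adjacent e (nbh e C1 :\: nbh e C2) C1)) => [h|h1]; [by left|right].
move=> y c2 yN c2C; apply/negPn/negP => nyc2.
have [x [c1 [xN c1C nxc1]]] : exists x c1,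
    [/\ x \in nbh e C1 :\: nbh e C2, c1 \in C1 & ~~ e x c1].
  apply: NNPP => H; apply: h1 => z c zN cC; apply/negPn/negP => nzc.
  by apply: H; exists z, c; split.
move: xN yN; rewrite !in_setD => /andP[xN2 xN1] /andP[yN1 yN2].
have xW : x \in W := subsetP nW1 _ xN1.
have yW : y \in W := subsetP nW2 _ yN2.
have xC1 : x \notin C1 by apply: contraL xW; apply: W1.
have xC2 : x \notin C2 by apply: contraL xW; apply: W2.
have yC1 : y \notin C1 by apply: contraL yW; apply: W1.
have yC2 : y \notin C2 by apply: contraL yW; apply: W2.
have nxy : x != y by apply: contraNneq yN1 => <-.
have [u0 u0C eu0x] : exists2 u, u \in C1 & e u x.
  by move: xN1; rewrite inE => /andP[_ /existsP[u /andP[uC eu]]]; exists u.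
have exu0 : e x u0 by rewrite esym.
have [a1 [a2 [a1C a2C ea12 exa1 nxa2]]] := exit_edge (P := e x) cc1 u0C c1C exu0 nxc1.
have [w0 w0C ew0y] : exists2 w, w \in C2 & e w y.
  by move: yN2; rewrite inE => /andP[_ /existsP[w /andP[wC ew]]]; exists w.
have eyw0 : e y w0 by rewrite esym.
have [b1 [b2 [b1C b2C eb12 eyb1 nyb2]]] := exit_edge (P := e y) cc2 w0C c2C eyw0 nyc2.
have na1 a : a \in C1 -> ~~ e a y by move=> aC; apply: contra yN1; apply: nbh_in.
have nb2 b : b \in C2 -> ~~ e b x by move=> bC; apply: contra xN2; apply: nbh_in.
have nab a b : a \in C1 -> b \in C2 -> ~~ e a b.
  move=> aC bC; apply/negP => eab.
  by move: (W2 _ bC); rewrite (subsetP nW1 _ (nbh_in aC (d21 _ bC) eab)).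
apply: p6.
case: (boolP (e x y)) => exy.
  apply: (@P6_of T e a2 a1 x y b1 b2) => //; try by rewrite esym.
  all: try first [ by apply: na1 | by apply: nab | by rewrite esym; apply: nb2 ].
have [C3 [dC3 cc3 nW3 xN3 yN3]] := pmc_sep esym mt clW xW yW nxy exy.
have W3 c : c \in C3 -> c \notin W by move=> c3; rewrite (disjointFr dC3 c3).
have d31 c : c \in C3 -> c \notin C1.
  move=> c3; apply/negP => c1'.
  have s := comp_absorb esym cC1 cc3 dC3 c3 c1'.
  move: yN3; rewrite inE => /andP[_ /existsP[w /andP[wC ew]]].
  by move: yN1; rewrite (nbh_in (subsetP s _ wC) yC1 ew).
have d32 c : c \in C3 -> c \notin C2.
  move=> c3; apply/negP => c2'.
  have s := comp_absorb esym cC2 cc3 dC3 c3 c2'.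
  move: xN3; rewrite inE => /andP[_ /existsP[w /andP[wC ew]]].
  by move: xN2; rewrite (nbh_in (subsetP s _ wC) xC2 ew).
have nac a c : a \in C1 -> c \in C3 -> ~~ e a c.
  move=> aC cC; apply/negP => eac.
  by move: (W3 _ cC); rewrite (subsetP nW1 _ (nbh_in aC (d31 _ cC) eac)).
have nbc b c : b \in C2 -> c \in C3 -> ~~ e c b.
  move=> bC cC; apply/negP => ecb; rewrite esym in ecb.
  by move: (W3 _ cC); rewrite (subsetP nW2 _ (nbh_in bC (d32 _ cC) ecb)).
case: (boolP [exists c in C3, e x c && e y c]) => [/existsP[c /and3P[cC exc eyc]]|noA].
  apply: (@P6_of T e a2 a1 x c y b1) => //; try by rewrite esym.
  all: try first [ by apply: na1 | by apply: nab | by apply: nac | by apply: nbc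
             | by rewrite esym; apply: nb2 ].
have nA c : c \in C3 -> e x c -> ~~ e y c.
  move=> cC exc; apply/negP => eyc; move/existsP: noA; apply.
  by exists c; rewrite cC exc eyc.
case: (boolP [exists d in C3, exists c in C3, [&& e y d, ~~ e x d, e x c & e c d]])
   => [/existsP[d /andP[dC /existsP[c /andP[cC /and4P[eyd nxd exc ecd]]]]]|noB].
  apply: (@P6_of T e a1 x c d y b1) => //; try by rewrite esym.
  all: try first [ by apply: na1 | by apply: nab | by apply: nac | by apply: nbc
             | by rewrite esym; apply: nb2 | by rewrite esym; apply: nA ].
have [c0 c0C ec0x] : exists2 u, u \in C3 & e u x.
  by move: xN3; rewrite inE => /andP[_ /existsP[u /andP[uC eu]]]; exists u.
have [d0 d0C ed0y] : exists2 u, u \in C3 & e u y.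
  by move: yN3; rewrite inE => /andP[_ /existsP[u /andP[uC eu]]]; exists u.
pose P v := e x v || [exists c in C3, e x c && e c v].
have Pc0 : P c0 by rewrite /P esym ec0x.
have nPd0 : ~~ P d0.
  rewrite /P negb_or; apply/andP; split.
    by apply/negP => exd; move: (nA _ d0C exd); rewrite esym ed0y.
  apply/negP => /existsP[c /andP[cC /andP[exc ecd]]].
  move/existsP: noB; apply; exists d0; rewrite d0C; apply/existsP; exists c.
  rewrite cC esym ed0y exc ecd /= andbT; apply/negP => exd.
  by move: (nA _ d0C exd); rewrite esym ed0y.
have [u [v [uC vC euv Pu nPv]]] := exit_edge (P := P) cc3 c0C d0C Pc0 nPd0.
move: nPv; rewrite /P negb_or => /andP[nxv noc].
have nxu : ~~ e x u.
  by apply/negP => exu; move/negP: noc; apply; apply/existsP; exists u; rewrite uC exu euv.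
move: Pu; rewrite /P (negbTE nxu) /= => /existsP[c /andP[cC /andP[exc ecu]]].
have ncv : ~~ e c v.
  by apply/negP => ecv; move/negP: noc; apply; apply/existsP; exists c; rewrite cC exc ecv.
apply: (@P6_of T e a2 a1 x c u v) => //; try by rewrite esym.
all: first [ by apply: nac ].
Qed.
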